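(* Consider the stochastic bipartite matching model described in the context, under the stability condition, with stationary distribution $\pi$. Then for every $\mathcal{A} \in \mathcal{J}$, \[ \Delta(\mathcal{A})\, \pi(\mathcal{A}) = \mu(\mathcal{A}\cap\mathcal{K}) \sum_{i \in \mathcal{A}\cap\mathcal{I}} \lambda_i\, \pi(\mathcal{A}\setminus\{i\}) + \lambda(\mathcal{A}\cap\mathcal{I}) \sum_{k \in \mathcal{A}\cap\mathcal{K}} \mu_k\, \pi(\mathcal{A}\setminus\{k\}) + \sum_{i \in \mathcal{A}\cap\mathcal{I}} \sum_{k\in\mathcal{A}\cap\mathcal{K}} \lambda_i \mu_k\, \pi(\mathcal{A}\setminus\{i,k\}). \]
   Context: Let $\mathcal{I}$ (customer classes) and $\mathcal{K}$ (server classes) be disjoint finite non-empty sets, and consider a connected bipartite graph (the compatibility graph) on $\mathcal{I}\cup\mathcal{K}$ whose edges all join an element of $\mathcal{I}$ to an element of $\mathcal{K}$; write $i\sim k$ if $i\in\mathcal{I}$ and $k\in\mathcal{K}$ are adjacent and $i\nsim k$ otherwise. For $i\in\mathcal{I}$ let $\mathcal{K}_i=\{k\in\mathcal{K}: i\sim k\}$ and for $k\in\mathcal{K}$ let $\mathcal{I}_k=\{i\in\mathcal{I}: i\sim k\}$. Let $\lambda_i>0$ ($i\in\mathcal{I}$) and $\mu_k>0$ ($k\in\mathcal{K}$) with $\sum_i\lambda_i=\sum_k\mu_k=1$. For $\mathcal{A}\subseteq\mathcal{I}$ write $\lambda(\mathcal{A})=\sum_{i\in\mathcal{A}}\lambda_i$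 and $\mathcal{K}(\mathcal{A})=\bigcup_{i\in\mathcal{A}}\mathcal{K}_i$; for $\mathcal{A}\subseteq\mathcal{K}$ write $\mu(\mathcal{A})=\sum_{k\in\mathcal{A}}\mu_k$ and $\mathcal{I}(\mathcal{A})=\bigcup_{k\in\mathcal{A}}\mathcal{I}_k$. Model: time is slotted; in each slot exactly one customer and one server arrive, the customer being of class $i$ with probability $\lambda_i$ and the server of class $k$ with probability $\mu_k$, independently within and across slots. Unmatched customers and unmatched servers wait in two queues in arrival order. Upon each arrival (first-come-first-matched policy): (1) the incoming customer is matched with the longest-waiting compatible unmatched server, if any; (2) the incoming server is matched with the longest-waiting compatible unmatched customer, if any; (3) if neither can be matched with a waiting item, they are matched with each other if compatible; (4) any incoming item still unmatched is appended to the back of its queue. Matched items leave immediately. The state is $(c,d)$ with $c=(c_1,\dots,c_n)$ the classes of unmatched customers and $d=(d_1,\dots,d_n)$ the classes of unmatched servers, in arrival order (the two lengths are always equal); the state space is $\Pi=\bigcup_{n\ge0}\{(c,d)\in\mathcal{I}^n\times\mathcal{K}^n: c_p\nsim d_q\ \forall p,q\}$, and $\varnothing$ denotes the empty state. Stability condition (assumed): $\lambda(\mathcal{A})<\mu(\mathcal{K}(\mathcal{A}))$ for every non-empty $\mathcal{A}\subsetneq\mathcal{I}$ (equivalently $\mu(\mathcal{A})<\lambda(\mathcal{I}(\mathcal{A}))$ for every non-empty $\mathcal{A}\subsetneq\mathcal{K}$). Then the Markov chain of states is ergodic with stationary distribution $\pi(c,d)=\pi(\varnothing)\prod_{p=1}^n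 \frac{\lambda_{c_p}}{\mu(\mathcal{K}(\{c_1,\dots,c_p\}))}\frac{\mu_{d_p}}{\lambda(\mathcal{I}(\{d_1,\dots,d_p\}))}$, $(c,d)\in\Pi$. Let $\mathcal{J}$ be the family of independent sets $\mathcal{A}\subseteq\mathcal{I}\cup\mathcal{K}$ of the compatibility graph such that $\mathcal{A}\cap\mathcal{I}$ and $\mathcal{A}\cap\mathcal{K}$ are both non-empty, and $\mathcal{J}_0=\mathcal{J}\cup\{\emptyset\}$. For $\mathcal{A}\in\mathcal{J}_0$, let $\Pi_{\mathcal{A}}$ be the set of $(c,d)\in\Pi$ with $\{c_1,\dots,c_n\}=\mathcal{A}\cap\mathcal{I}$ and $\{d_1,\dots,d_n\}=\mathcal{A}\cap\mathcal{K}$, and $\pi(\mathcal{A})=\sum_{(c,d)\in\Pi_{\mathcal{A}}}\pi(c,d)$; by convention $\pi(\mathcal{A})=0$ if $\mathcal{A}\notin\mathcal{J}_0$. For $\mathcal{A}\in\mathcal{J}$, $\Delta(\mathcal{A})=\mu(\mathcal{K}(\mathcal{A}\cap\mathcal{I}))\,\lambda(\mathcal{I}(\mathcal{A}\cap\mathcal{K}))-\lambda(\mathcal{A}\cap\mathcal{I})\,\mu(\mathcal{A}\cap\mathcal{K})$. *)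

(* Defs.v *)
From HB Require Import structures.
From mathcomp Require Import all_boot all_order all_algebra.
From mathcomp Require Import all_classical all_reals all_analysis.
Set Implicit Arguments. Unset Strict Implicit. Unset Printing Implicit Defensive.
Import Order.TTheory GRing.Theory Num.Theory numFieldNormedType.Exports.
Local Open Scope ring_scope.

Section Matching.
Variables (R : realType) (I K : finType) (adj : I -> K -> bool)
          (lam : I -> R) (mu : K -> R).

Definition lamS (A : {set I}) : R := \sum_(i in A) lam i.
Definition muS (A : {set K}) : R := \sum_(k in A) mu k.

Definition KofI (A : {set I}) : {set K} := [set k | [exists i in A, adj i k]].
Definition IofK (A : {set K}) : {set I} := [set i | [exists k in A, adj i k]].

Definition graph_rel : rel (I + K)%type := fun x y =>
  match x, y with
  | inl i, inr k => adj i k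
  | inr k, inl i => adj i k
  | _, _ => false
  end.

Definition connected_graph : Prop := forall x y : (I + K)%type, connect graph_rel x y.

(* (c,d) of length n is a state of Pi: no unmatched customer is compatible
   with an unmatched server *)
Definition valid_state n (c : n.-tuple I) (d : n.-tuple K) : bool :=
  [forall p : 'I_n, forall q : 'I_n, ~~ adj (tnth c p) (tnth d q)].

Definition prefI n (c : n.-tuple I) (p : 'I_n) : {set I} :=
  [set tnth c q | q : 'I_n & (q <= p)%N].
Definition prefK n (d : n.-tuple K) (p : 'I_n) : {set K} :=
  [set tnth d q | q : 'I_n & (q <= p)%N].

(* unnormalized product-form weight pi(c,d)/pi(empty) *)
Definition weight n (c : n.-tuple I) (d : n.-tuple K) : R :=
  \prod_(p < n) (lam (tnth c p) / muS (KofI (prefI c p))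
                 * (mu (tnth d p) / lamS (IofK (prefK d p)))).

Definition mass_n (n : nat) : R :=
  \sum_(c : n.-tuple I) \sum_(d : n.-tuple K | valid_state c d) weight c d.

Definition pi0 : R := (limn (series mass_n))^-1.

Definition massA_n (AI : {set I}) (AK : {set K}) (n : nat) : R :=
  \sum_(c : n.-tuple I) \sum_(d : n.-tuple K |
      [&& valid_state c d, [set x in tval c] == AI & [set x in tval d] == AK])
    weight c d.

(* pi(A) = sum of pi(c,d) over (c,d) in Pi_A; it is automatically 0 when
   A = AI u AK is not in J_0 (then Pi_A is empty) *)
Definition piA (AI : {set I}) (AK : {set K}) : R :=
  pi0 * limn (series (massA_n AI AK)).

Definition Delta (AI : {set I}) (AK : {set K}) : R :=
  muS (KofI AI) * lamS (IofK AK) - lamS AI * muS AK.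

End Matching.

(* Main.v *)
Require Import Defs.
From HB Require Import structures.
From mathcomp Require Import all_boot all_order all_algebra.
From mathcomp Require Import all_classical all_reals all_analysis.
From mathcomp Require Import ring lra zify.
Import Order.TTheory GRing.Theory Num.Theory numFieldNormedType.Exports.
Local Open Scope ring_scope.

Section Comb.
Variables (R : realType) (T : finType).
Implicit Types (w : T -> R) (f : {set T} -> R).

Lemma prefI_take n (c : n.-tuple T) (p : 'I_n) :
  prefI c p = [set x in take p.+1 (tval c)].
Proof.
have hs : size (take p.+1 (tval c)) = p.+1 by rewrite size_takel // size_tuple.
apply/setP => x; rewrite inE; apply/imsetP/idP.
- case=> q; rewrite inE => qp ->.
  rewrite (tnth_nth x); apply/(nthP x); exists q; first by rewrite hs ltnS.
  by rewrite nth_take // ltnS.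
- case/(nthP x) => q; rewrite hs => qp <-.
  have qn : (q < n)%N by apply: leq_trans qp _; exact: ltn_ord.
  exists (Ordinal qn); first by rewrite inE -ltnS.
  by rewrite (tnth_nth x) nth_take.
Qed.

Lemma sum_tupleS n (F : (n.+1).-tuple T -> R) :
  \sum_(c : n.+1.-tuple T) F c = \sum_(c : n.-tuple T) \sum_(x : T) F [tuple of rcons c x].
Proof.
rewrite pair_big /=.
pose h (p : n.-tuple T * T) : n.+1.-tuple T := [tuple of rcons p.1 p.2].
have hinj : injective h.
  move=> [a x] [b y] /(congr1 val) /= /rcons_inj [] /val_inj -> -> //.
have hbij : bijective h.
  apply: (inj_card_bij hinj); rewrite card_prod !card_tuple expnS mulnC leqnn //.
rewrite (reindex h) //; exact: onW_bij.
Qed.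

Definition wt (w : T -> R) (f : {set T} -> R) n (c : n.-tuple T) : R :=
  \prod_(p < n) (w (tnth c p) / f (prefI c p)).
Arguments wt w f {n} c.

Definition Ssum (w : T -> R) (f : {set T} -> R) (A : {set T}) n : R :=
  \sum_(c : n.-tuple T | [set x in tval c] == A) wt w f c.

Lemma set_rcons n (c : n.-tuple T) x :
  [set y in rcons (tval c) x] = x |: [set y in tval c].
Proof. by apply/setP => y; rewrite !inE mem_rcons in_cons. Qed.

Lemma wt_rcons w f n (c : n.-tuple T) x :
  wt w f [tuple of rcons c x] = wt w f c * (w x / f (x |: [set y in tval c])).
Proof.
rewrite /wt big_ord_recr /=; congr (_ * (w _ / f _)).
- apply: eq_bigr => p _; congr (w _ / f _).
    by rewrite !(tnth_nth x) /= nth_rcons size_tuple /= ltn_ord.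
  rewrite !prefI_take /= -cats1 takel_cat // size_tuple; exact: ltn_ord.
- by rewrite (tnth_nth x) /= nth_rcons size_tuple ltnn eqxx.
- rewrite prefI_take /= take_oversize ?set_rcons //.
  by rewrite size_rcons size_tuple.
Qed.

Lemma setU1_eq (x : T) (B A : {set T}) :
  (x |: B == A) = (x \in A) && ((B == A) || (B == A :\ x)).
Proof.
apply/eqP/idP.
- move=> <-; rewrite finset.setU11 /=.
  case xB: (x \in B).
    by apply/orP; left; apply/eqP; symmetry; apply/finset.setUidPr; rewrite finset.sub1set xB.
  by apply/orP; right; rewrite finset.setU1K ?xB.
- case/andP => xA /orP [/eqP-> | /eqP->]; last exact: finset.setD1K.
  by apply/finset.setUidPr; rewrite finset.sub1set.
Qed.

Lemma S_rec w f (A : {set T}) n : f A != 0 ->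
  f A * Ssum w f A n.+1 = \sum_(i in A) w i * (Ssum w f A n + Ssum w f (A :\ i) n).
Proof.
move=> fA0.
rewrite /Ssum big_mkcond sum_tupleS /= mulr_sumr.
under [LHS]eq_bigr => c _ do rewrite mulr_sumr.
rewrite [RHS]big_mkcond /=.
under [RHS]eq_bigr => i _.
  rewrite (_ : (if i \in A then _ else _) = \sum_(c : n.-tuple T)
     (if i \in A then w i * ((if [set x in tval c] == A then wt w f c else 0)
        + (if [set x in tval c] == A :\ i then wt w f c else 0)) else 0)).
  over.
  case: ifP => iA; last by rewrite big1.
  by rewrite -mulr_sumr big_split /= -!big_mkcond.
rewrite [RHS]exchange_big /=; apply: eq_bigr => c _; apply: eq_bigr => x _.
rewrite set_rcons wt_rcons setU1_eq.
case xA: (x \in A) => /=; last by rewrite mulr0.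
have nAx : (A == A :\ x) = false.
  by apply/negbTE/eqP => /setP /(_ x); rewrite finset.setD11 xA.
have xAA : x |: A = A by apply/finset.setUidPr; rewrite finset.sub1set.
have [->|nA] := eqVneq [set y in tval c] A.
  by rewrite nAx /= xAA addr0; field.
rewrite /=.
have [->|nA'] := eqVneq [set y in tval c] (A :\ x).
  by rewrite /= finset.setD1K // add0r; field.
by rewrite mulr0 addr0 mulr0.
Qed.

Lemma wt_ge0 w f n (c : n.-tuple T) : (forall x, 0 <= w x) -> (forall B, 0 <= f B) ->
  0 <= wt w f c.
Proof. by move=> w0 f0; apply: prodr_ge0 => p _; apply: divr_ge0. Qed.

Lemma S_ge0 w f A n : (forall x, 0 <= w x) -> (forall B, 0 <= f B) -> 0 <= Ssum w f A n.
Proof. by move=> w0 f0; apply: sumr_ge0 => c _; exact: wt_ge0. Qed.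

Lemma S_0 w f A : A != finset.set0 -> Ssum w f A 0 = 0.
Proof.
move=> A0; rewrite /Ssum big1 // => c /eqP Hc; move: A0; rewrite -Hc.
by case/finset.set0Pn => y; rewrite inE tuple0.
Qed.

Lemma S_set0 w f n : Ssum w f finset.set0 n.+1 = 0.
Proof.
rewrite /Ssum big1 // => c /eqP/setP/(_ (tnth c ord0)).
by rewrite !inE mem_tnth.
Qed.
End Comb.
Arguments Ssum {R T}. Arguments wt {R T} w f {n} c.

Section Main.
Variables (R : realType) (I K : finType) (adj : I -> K -> bool)
          (lam : I -> R) (mu : K -> R).

Definition fI (A : {set I}) : R := muS mu (KofI adj A).
Definition fK (B : {set K}) : R := lamS lam (IofK adj B).

Definition indep (AI : {set I}) (AK : {set K}) :=
  forall i k, i \in AI -> k \in AK -> ~~ adj i k.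

Lemma massA_eq AI AK n : indep AI AK ->
  massA_n adj lam mu AI AK n = Ssum lam fI AI n * Ssum mu fK AK n.
Proof.
move=> hind; rewrite /massA_n /Ssum big_distrl /= [RHS]big_mkcond.
apply: eq_bigr => c _.
case cA: ([set x in tval c] == AI); last first.
  by rewrite big1 // => d; rewrite andbF.
rewrite [RHS]big_distrr /= big_mkcond [RHS]big_mkcond /=; apply: eq_bigr => d _.
case dA: ([set x in tval d] == AK); last by rewrite !andbF.
have -> : valid_state adj c d.
  apply/forallP => p; apply/forallP => q; apply: hind.
    by rewrite -(eqP cA) inE mem_tnth.
  by rewrite -(eqP dA) inE mem_tnth.
by rewrite /= /weight big_split.
Qed.
End Main.
Arguments fI {R I K} adj mu A.
Arguments fK {R I K} adj lam B.
Arguments indep {I K} adj AI AK.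
Arguments massA_eq {R I K} adj lam mu AI AK n.

Section Sums.
Variables (R : realType) (T : finType) (F : T -> R).

Lemma sum_sub (A B : {set T}) : (forall x, 0 <= F x) -> A \subset B ->
  \sum_(x in A) F x <= \sum_(x in B) F x.
Proof.
move=> F0 AB; rewrite [X in X <= _]big_mkcond [X in _ <= X]big_mkcond /=.
apply: ler_sum => x _; case xA: (x \in A).
  by rewrite (fintype.subsetP AB x xA).
by case: (x \in B).
Qed.

Lemma sum_compl (A : {set T}) :
  \sum_(x in ~: A) F x = \sum_x F x - \sum_(x in A) F x.
Proof.
rewrite [X in _ = X - _](bigID (fun x => x \in A)) /=.
rewrite addrC addrK; apply: eq_bigl => x; by rewrite inE.
Qed.

Lemma sum_pos (A : {set T}) : (forall x, 0 < F x) -> A != finset.set0 ->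
  0 < \sum_(x in A) F x.
Proof.
move=> F0 /finset.set0Pn [x xA].
apply: (lt_le_trans (F0 x)); have -> : F x = \sum_(y in [set x]) F y by rewrite big_set1E addr0.
by apply: sum_sub => [y|]; [exact: ltW | rewrite finset.sub1set].
Qed.
End Sums.

Section Stab.
Variables (R : realType) (I K : finType) (adj : I -> K -> bool)
          (lam : I -> R) (mu : K -> R).
Hypothesis Hconn : connected_graph adj.

Lemma nbrI i (k0 : K) : exists k, adj i k.
Proof.
have /connectP [p] := Hconn (inl i) (inr k0).
case: p => [|y p] /=; first by [].
case/andP; case: y => // k hk _ _; by exists k.
Qed.

Lemma nbrK k (i0 : I) : exists i, adj i k.
Proof.
have /connectP [p] := Hconn (inr k) (inl i0).
case: p => [|y p] /=; first by [].
case/andP; case: y => // i hk _ _; by exists i.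
Qed.
End Stab.
Arguments nbrI {I K adj} Hconn i k0.
Arguments nbrK {I K adj} Hconn k i0.

Section Stab2.
Variables (R : realType) (I K : finType) (adj : I -> K -> bool)
          (lam : I -> R) (mu : K -> R).
Hypotheses (Hconn : connected_graph adj)
    (Hlam : forall i, 0 < lam i) (Hmu : forall k, 0 < mu k)
    (Hlam1 : \sum_(i : I) lam i = 1) (Hmu1 : \sum_(k : K) mu k = 1)
    (Hstab : forall A : {set I}, A != finset.set0 -> A != [set: I] ->
       lamS lam A < muS mu (KofI adj A)).

Lemma stab_pair AI AK : indep adj AI AK -> AI != finset.set0 -> AK != finset.set0 ->
  [/\ 0 < lamS lam AI, lamS lam AI < fI adj mu AI,
      0 < muS mu AK & muS mu AK < fK adj lam AK].
Proof.
move=> hind AI0 AK0.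
have [i0 i0A] := finset.set0Pn _ AI0.
have [k0 k0A] := finset.set0Pn _ AK0.
split.
- exact: sum_pos.
- apply: Hstab => //; apply/eqP => AIT.
  have [i hi] := nbrK Hconn k0 i0.
  by move: (hind i k0); rewrite AIT inE hi => /(_ isT k0A).
- exact: sum_pos.
- rewrite /fK.
  set B := ~: IofK adj AK.
  have [k1 hk1] := nbrI Hconn i0 k0.
  have k1A : k1 \notin AK by apply/negP => /(hind _ _ i0A); rewrite hk1.
  have muAK1 : muS mu AK < 1.
    rewrite -Hmu1 -subr_gt0 -sum_compl; apply: sum_pos => //.
    by apply/finset.set0Pn; exists k1; rewrite inE.
  have [B0|BN0] := eqVneq B finset.set0.
    have -> : IofK adj AK = [set: I].
      apply/setP => i; move/setP: B0 => /(_ i); rewrite /B finset.in_setC finset.in_set0 finset.in_setT => /negbFE //.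
    by rewrite /lamS (eq_bigl xpredT) ?Hlam1 // => i; rewrite inE.
  have BT : B != [set: I].
    have [i1 hi1] := nbrK Hconn k0 i0.
    apply/eqP => /setP /(_ i1); rewrite /B finset.in_setC finset.in_setT => /negP; apply.
    by rewrite /IofK inE; apply/existsP; exists k0; rewrite k0A hi1.
  have h1 := Hstab _ BN0 BT.
  have h2 : muS mu (KofI adj B) <= muS mu (~: AK).
    apply: sum_sub => [k|]; first exact: ltW.
    apply/fintype.subsetP => k; rewrite /KofI inE finset.in_setC => /existsP [i /andP [iB hik]].
    apply/negP => kA; move: iB; rewrite /B finset.in_setC => /negP; apply.
    by rewrite /IofK inE; apply/existsP; exists k; rewrite kA hik.
  move: h1 h2; rewrite /muS /lamS sum_compl Hmu1 /B sum_compl Hlam1.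
  rewrite -/(lamS lam (IofK adj AK)) -/(muS mu AK) /lamS. lra.
Qed.
End Stab2.
Arguments stab_pair {R I K adj lam mu} Hconn Hlam Hmu Hlam1 Hmu1 Hstab AI AK.

Section Lim.
Local Open Scope classical_set_scope.
Variable R : realType.

Lemma cvg_bigsum (J : Type) (r : seq J) (P : pred J) (u : J -> nat -> R) (l : J -> R) :
  (forall j, P j -> u j @ \oo --> l j) ->
  (fun n => \sum_(j <- r | P j) u j n) @ \oo --> \sum_(j <- r | P j) l j.
Proof.
move=> hu; elim: r => [|j r IH].
  under eq_fun do rewrite big_nil; rewrite big_nil; exact: cvg_cst.
rewrite big_cons; case Pj: (P j).
  under eq_fun do rewrite big_cons Pj.
  by apply: cvgD => //; exact: hu.
by under eq_fun do rewrite big_cons Pj.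
Qed.

Lemma ser_nd (u : R ^nat) : (forall n, 0 <= u n) -> nondecreasing_seq (series u).
Proof.
move=> u0 a b ab; rewrite /series /= (big_cat_nat (leq0n a) ab) /= lerDl.
by apply: sumr_ge0 => n _.
Qed.
End Lim.

Section Conv.
Variables (R : realType) (I K : finType) (adj : I -> K -> bool)
          (lam : I -> R) (mu : K -> R).
Hypotheses (Hconn : connected_graph adj)
    (Hlam : forall i, 0 < lam i) (Hmu : forall k, 0 < mu k)
    (Hlam1 : \sum_(i : I) lam i = 1) (Hmu1 : \sum_(k : K) mu k = 1)
    (Hstab : forall A : {set I}, A != finset.set0 -> A != [set: I] ->
       lamS lam A < muS mu (KofI adj A)).

Local Notation m := (massA_n adj lam mu).

Lemma indep_sub (AI AI' : {set I}) (AK AK' : {set K}) : AI' \subset AI -> AK' \subset AK ->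
  indep adj AI AK -> indep adj AI' AK'.
Proof.
move=> s1 s2 h i k iA kA; apply: h.
  exact: (fintype.subsetP s1). exact: (fintype.subsetP s2).
Qed.

Lemma fI_ge0 A : 0 <= fI adj mu A.
Proof. by apply: sumr_ge0 => k _; exact: ltW. Qed.
Lemma fK_ge0 A : 0 <= fK adj lam A.
Proof. by apply: sumr_ge0 => k _; exact: ltW. Qed.

Lemma m_ge0 AI AK n : indep adj AI AK -> 0 <= m AI AK n.
Proof.
move=> h; rewrite massA_eq //; apply: mulr_ge0; apply: S_ge0 => x;
  by [exact: ltW | exact: fI_ge0 | exact: fK_ge0].
Qed.

Lemma m0 AI AK : indep adj AI AK -> AI != finset.set0 -> m AI AK 0 = 0.
Proof. by move=> h A0; rewrite massA_eq // S_0 // mul0r. Qed.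

Lemma mS_empty AI AK n : indep adj AI AK ->
  (AI == finset.set0) || (AK == finset.set0) -> m AI AK n.+1 = 0.
Proof.
move=> h /orP [] /eqP E; rewrite massA_eq // E S_set0 ?mul0r ?mulr0 //.
Qed.

Lemma dbl2 (AI : {set I}) (AK : {set K}) (a : I -> R) (b : K -> R) :
  (\sum_(i in AI) a i) * (\sum_(k in AK) b k) = \sum_(i in AI) \sum_(k in AK) a i * b k.
Proof. by rewrite big_distrl /=; apply: eq_bigr => i _; rewrite big_distrr. Qed.

Lemma dbl (AI : {set I}) (AK : {set K}) (a : I -> R) (b : K -> R) X :
  (\sum_(i in AI) a i) * (\sum_(k in AK) b k) * X =
  \sum_(i in AI) \sum_(k in AK) a i * b k * X.
Proof. by rewrite dbl2 big_distrl /=; apply: eq_bigr => i _; rewrite big_distrl. Qed.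

Definition r (AI : {set I}) (AK : {set K}) n := \sum_(i in AI) \sum_(k in AK) lam i * mu k *
  (m (AI :\ i) AK n + m AI (AK :\ k) n + m (AI :\ i) (AK :\ k) n).

Lemma m_rec (AI : {set I}) (AK : {set K}) n : indep adj AI AK -> AI != finset.set0 -> AK != finset.set0 ->
  fI adj mu AI * fK adj lam AK * m AI AK n.+1 =
  lamS lam AI * muS mu AK * m AI AK n + r AI AK n.
Proof.
move=> h A0 B0.
have [l0 h1 m0' h2] := stab_pair Hconn Hlam Hmu Hlam1 Hmu1 Hstab AI AK h A0 B0.
have fI0 : fI adj mu AI != 0 by rewrite gt_eqF // (lt_trans l0 h1).
have fK0 : fK adj lam AK != 0 by rewrite gt_eqF // (lt_trans m0' h2).
have e := fun (AI' : {set I}) (AK' : {set K}) (s1 : AI' \subset AI) (s2 : AK' \subset AK) =>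
  massA_eq adj lam mu AI' AK' n (@indep_sub AI AI' AK AK' s1 s2 h).
rewrite massA_eq // (e AI AK) // /r.
set sI := Ssum lam (fI adj mu); set sK := Ssum mu (fK adj lam).
rewrite (eq_bigr (fun i => \sum_(k in AK) lam i * mu k *
   (sI (AI :\ i) n * sK AK n + sI AI n * sK (AK :\ k) n
    + sI (AI :\ i) n * sK (AK :\ k) n))); last first.
  move=> i iA; apply: eq_bigr => k kA.
  by rewrite (e (AI :\ i) AK) ?subD1set // (e AI (AK :\ k)) ?subD1set //
     (e (AI :\ i) (AK :\ k)) ?subD1set.
rewrite mulrACA /sI /sK S_rec // S_rec // dbl2 /lamS /muS dbl -big_split /=.
apply: eq_bigr => i _; rewrite -big_split /=; apply: eq_bigr => k _; ring.
Qed.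

Lemma part_rec (AI : {set I}) (AK : {set K}) N : indep adj AI AK ->
  AI != finset.set0 -> AK != finset.set0 ->
  fI adj mu AI * fK adj lam AK * series (m AI AK) N.+1 =
  lamS lam AI * muS mu AK * series (m AI AK) N + series (r AI AK) N.
Proof.
move=> h A0 B0; rewrite /series /= big_nat_recl // m0 // add0r.
set c := fI adj mu AI * fK adj lam AK; set b := lamS lam AI * muS mu AK.
rewrite !mulr_sumr -big_split /=.
by apply: eq_bigr => n _; rewrite /c /b m_rec.
Qed.

Lemma r_series (AI : {set I}) (AK : {set K}) N :
  series (r AI AK) N = \sum_(i in AI) \sum_(k in AK) lam i * mu k *
  (series (m (AI :\ i) AK) N + series (m AI (AK :\ k)) N
   + series (m (AI :\ i) (AK :\ k)) N).
Proof.
rewrite /series /r /= exchange_big; apply: eq_bigr => i _.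
rewrite exchange_big; apply: eq_bigr => k _.
by rewrite -mulr_sumr -!big_split.
Qed.

Lemma cvg_empty (AI : {set I}) (AK : {set K}) : indep adj AI AK ->
  (AI == finset.set0) || (AK == finset.set0) -> cvgn (series (m AI AK)).
Proof.
move=> h E; apply: nondecreasing_is_cvgn.
  by apply: ser_nd => n; exact: m_ge0.
exists (m AI AK 0) => _ [N _ <-].
case: N => [|N]; first by rewrite /series /= big_geq //; exact: m_ge0.
rewrite /series /= big_nat_recl // big1 ?addr0 // => n _; exact: mS_empty.
Qed.

Lemma cvg_all N : forall (AI : {set I}) (AK : {set K}),
  (#|AI| + #|AK| <= N)%N -> indep adj AI AK -> cvgn (series (m AI AK)).
Proof.
elim: N => [|N IH] AI AK hN h.
  apply: cvg_empty => //; apply/orP; left; rewrite -cards_eq0; apply/eqP; lia.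
case E: ((AI == finset.set0) || (AK == finset.set0)); first exact: cvg_empty.
move/negbT: E; rewrite negb_or => /andP [A0 B0].
have [l0 h1 m0' h2] := stab_pair Hconn Hlam Hmu Hlam1 Hmu1 Hstab AI AK h A0 B0.
have cI : forall i, i \in AI -> cvgn (series (m (AI :\ i) AK)).
  move=> i iA; apply: IH; last exact: (@indep_sub AI _ AK _ (subD1set _ _) (subxx _) h).
  move: hN; rewrite (cardsD1 i AI) iA; lia.
have cK : forall k, k \in AK -> cvgn (series (m AI (AK :\ k))).
  move=> k kA; apply: IH; last exact: (@indep_sub AI _ AK _ (subxx _) (subD1set _ _) h).
  move: hN; rewrite (cardsD1 k AK) kA; lia.
have cIK : forall i k, i \in AI -> k \in AK -> cvgn (series (m (AI :\ i) (AK :\ k))).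
  move=> i k iA kA; apply: IH; last exact: (@indep_sub AI _ AK _ (subD1set _ _) (subD1set _ _) h).
  move: hN; rewrite (cardsD1 k AK) (cardsD1 i AI) iA kA; lia.
set c := fI adj mu AI * fK adj lam AK.
set b := lamS lam AI * muS mu AK.
have cb : 0 < c - b by rewrite subr_gt0 /c /b; apply: ltr_pM => //; exact: ltW.
set Rl := \sum_(i in AI) \sum_(k in AK) lam i * mu k *
  (limn (series (m (AI :\ i) AK)) + limn (series (m AI (AK :\ k)))
   + limn (series (m (AI :\ i) (AK :\ k)))).
apply: nondecreasing_is_cvgn.
  by apply: ser_nd => n; exact: m_ge0.
exists (Rl / (c - b)) => _ [M _ <-].
rewrite ler_pdivlMr //.
have pr := part_rec AI AK M h A0 B0.
have nd : series (m AI AK) M <= series (m AI AK) M.+1.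
  by apply: ser_nd => // n; exact: m_ge0.
have c0 : 0 <= c by rewrite /c; apply: mulr_ge0; [exact: fI_ge0 | exact: fK_ge0].
have ndc := ler_wpM2l c0 nd.
have hi : forall i, indep adj (AI :\ i) AK.
  by move=> i; apply: (@indep_sub AI _ AK _ (subD1set _ _) (subxx _) h).
have hk : forall k, indep adj AI (AK :\ k).
  by move=> k; apply: (@indep_sub AI _ AK _ (subxx _) (subD1set _ _) h).
have hik : forall i k, indep adj (AI :\ i) (AK :\ k).
  by move=> i k; apply: (@indep_sub AI _ AK _ (subD1set _ _) (subD1set _ _) h).
have rle : series (r AI AK) M <= Rl.
  rewrite r_series /Rl; apply: ler_sum => i iA; apply: ler_sum => k kA.
  apply: ler_wpM2l; first by apply: mulr_ge0; exact: ltW.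
  apply: lerD; first apply: lerD.
  - apply: nondecreasing_cvgn_le; last exact: cI.
    by apply: ser_nd => n; apply: m_ge0.
  - apply: nondecreasing_cvgn_le; last exact: cK.
    by apply: ser_nd => n; apply: m_ge0.
  - apply: nondecreasing_cvgn_le; last exact: cIK.
    by apply: ser_nd => n; apply: m_ge0.
rewrite -/c -/b in pr.
move: pr ndc rle; set s0 := series (m AI AK) M; set s1 := series (m AI AK) M.+1.
set rr := series (r AI AK) M.
move=> pr ndc rle.
have -> : s0 * (c - b) = c * s0 - b * s0 by ring.
apply: (le_trans _ rle).
have -> : rr = c * s1 - b * s0 by rewrite pr addrAC subrr add0r.
by rewrite lerB.
Qed.
End Conv.

Section Fin.
Local Open Scope classical_set_scope.
Variables (R : realType) (I K : finType) (adj : I -> K -> bool)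
          (lam : I -> R) (mu : K -> R).
Hypotheses (Hconn : connected_graph adj)
    (Hlam : forall i, 0 < lam i) (Hmu : forall k, 0 < mu k)
    (Hlam1 : \sum_(i : I) lam i = 1) (Hmu1 : \sum_(k : K) mu k = 1)
    (Hstab : forall A : {set I}, A != finset.set0 -> A != finset.setT ->
       lamS lam A < muS mu (KofI adj A)).

Local Notation m := (massA_n adj lam mu).
Local Notation cvA := (cvg_all R I K adj lam mu Hconn Hlam Hmu Hlam1 Hmu1 Hstab).

Lemma cvgX (AI : {set I}) (AK : {set K}) : indep adj AI AK -> cvgn (series (m AI AK)).
Proof. by move=> h; apply: (cvA (#|AI| + #|AK|)). Qed.

Lemma lim_idM (AI : {set I}) (AK : {set K}) : indep adj AI AK ->
  AI != finset.set0 -> AK != finset.set0 ->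
  (fI adj mu AI * fK adj lam AK - lamS lam AI * muS mu AK) * limn (series (m AI AK)) =
  \sum_(i in AI) \sum_(k in AK) lam i * mu k *
  (limn (series (m (AI :\ i) AK)) + limn (series (m AI (AK :\ k)))
   + limn (series (m (AI :\ i) (AK :\ k)))).
Proof.
move=> h A0 B0.
have hi : forall i, indep adj (AI :\ i) AK.
  by move=> i; apply: (@indep_sub I K adj AI _ AK _ (subD1set _ _) (subxx _) h).
have hk : forall k, indep adj AI (AK :\ k).
  by move=> k; apply: (@indep_sub I K adj AI _ AK _ (subxx _) (subD1set _ _) h).
have hik : forall i k, indep adj (AI :\ i) (AK :\ k).
  by move=> i k; apply: (@indep_sub I K adj AI _ AK _ (subD1set _ _) (subD1set _ _) h).
set c := fI adj mu AI * fK adj lam AK.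
set b := lamS lam AI * muS mu AK.
set L := limn (series (m AI AK)).
have cA := cvgX AI AK h.
have sh : [sequence series (m AI AK) n.+1]_n @ \oo --> L by rewrite cvg_shiftS.
have h1 : (fun N => c * series (m AI AK) N.+1 - b * series (m AI AK) N) @ \oo --> c * L - b * L.
  by apply: cvgB; apply: cvgMl_tmp.
have e : (fun N => c * series (m AI AK) N.+1 - b * series (m AI AK) N) = series (r R I K adj lam mu AI AK).
  apply/funext => N; rewrite /c /b (part_rec R I K adj lam mu Hconn Hlam Hmu Hlam1 Hmu1 Hstab) //.
  by rewrite addrAC subrr add0r.
rewrite e in h1.
have h2 : series (r R I K adj lam mu AI AK) @ \oo --> \sum_(i in AI) \sum_(k in AK) lam i * mu k *
  (limn (series (m (AI :\ i) AK)) + limn (series (m AI (AK :\ k)))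
   + limn (series (m (AI :\ i) (AK :\ k)))).
  have -> : series (r R I K adj lam mu AI AK) = (fun N => \sum_(i in AI) \sum_(k in AK) lam i * mu k *
    (series (m (AI :\ i) AK) N + series (m AI (AK :\ k)) N
     + series (m (AI :\ i) (AK :\ k)) N)).
    by apply/funext => N; rewrite r_series.
  apply: cvg_bigsum => i _; apply: cvg_bigsum => k _; apply: cvgMl_tmp.
  apply: cvgD; first apply: cvgD; exact: cvgX.
by rewrite mulrBl -(cvg_lim (@Rhausdorff R) h1) (cvg_lim (@Rhausdorff R) h2).
Qed.
End Fin.

Theorem proposition1 (R : realType) (I K : finType) (adj : I -> K -> bool)
    (lam : I -> R) (mu : K -> R)
    (Hconn : connected_graph adj)
    (Hlam : forall i, 0 < lam i) (Hmu : forall k, 0 < mu k)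
    (Hlam1 : \sum_(i : I) lam i = 1) (Hmu1 : \sum_(k : K) mu k = 1)
    (Hstab : forall A : {set I}, A != finset.set0 -> A != [set: I] ->
       lamS lam A < muS mu (KofI adj A))
    (AI : {set I}) (AK : {set K})
    (Hind : forall i k, i \in AI -> k \in AK -> ~~ adj i k)
    (HAI : AI != finset.set0) (HAK : AK != finset.set0) :
  Delta adj lam mu AI AK * piA adj lam mu AI AK =
    muS mu AK * (\sum_(i in AI) lam i * piA adj lam mu (AI :\ i) AK)
  + lamS lam AI * (\sum_(k in AK) mu k * piA adj lam mu AI (AK :\ k))
  + \sum_(i in AI) \sum_(k in AK)
        lam i * mu k * piA adj lam mu (AI :\ i) (AK :\ k).
Proof.
have h : indep adj AI AK := Hind.
rewrite /piA; set p0 := pi0 adj lam mu.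
have -> : Delta adj lam mu AI AK * (p0 * limn (series (massA_n adj lam mu AI AK))) =
  p0 * ((fI adj mu AI * fK adj lam AK - lamS lam AI * muS mu AK) *
        limn (series (massA_n adj lam mu AI AK))).
  by rewrite /Delta /fI /fK mulrCA.
have E1 : forall X : I -> R, muS mu AK * (\sum_(i in AI) X i) =
    \sum_(i in AI) \sum_(k in AK) mu k * X i.
  by move=> X; rewrite mulr_sumr; apply: eq_bigr => i _; rewrite /muS big_distrl.
have E2 : forall Y : R, lamS lam AI * Y = \sum_(i in AI) lam i * Y.
  by move=> Y; rewrite /lamS big_distrl.
rewrite (lim_idM R I K adj lam mu Hconn Hlam Hmu Hlam1 Hmu1 Hstab) // E1 E2.
rewrite [LHS]mulr_sumr -!big_split /=.
apply: eq_bigr => i _; rewrite !mulr_sumr -!big_split /=.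
by apply: eq_bigr => k _; ring.
Qed.
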